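(* Let $\epsilon\in(0,1/2]$, $d\ge1$, and let $f$ be the binary-tree function of depth $d$ on $n=2^{d+1}-2$ variables, with unit costs and $p_i=\frac{1+\epsilon}{2}$ for all $i$. Let $q=\left(\frac{1+\epsilon}{2}\right)^d$ and suppose $q\le\epsilon$. Then $$\mathsf{OPT}_{\mathcal N}(f,c,p)\ge \frac{\epsilon^2}{8q}.$$
   Context: Stochastic Boolean Function Evaluation setup: the input $x\in\{0,1\}^n$ has independent coordinates with $\Pr(x_i=1)=p_i$; testing $x_i$ costs $c_i$ (here $c_i=1$). A non-adaptive strategy is a fixed permutation of $[n]$; variables are tested in that order until $f(x)$ is determined (i.e. $f(x')=f(x)$ for all $x'$ agreeing with $x$ on tested coordinates). $\mathsf{OPT}_{\mathcal N}(f,c,p)$ is the minimum expected total test cost over non-adaptive strategies. Binary-tree function of depth $d$: in the complete binary tree of depth $d$ (root at depth $0$, $2^d$ leaves), the $n=2^{d+1}-2$ edges are numbered $1,\dots,n$ and variable $x_i$ is associated with edge $i$; a leaf is alive if $x_i=1$ for every edge on its root-to-leaf path, and $f(x)=1$ iff some leaf is alive. *)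

(* Defs.v *)
From HB Require Import structures.
From mathcomp Require Import all_boot all_order fingroup perm all_algebra.
Set Implicit Arguments. Unset Strict Implicit. Unset Printing Implicit Defensive.
Import Order.TTheory GRing.Theory Num.Theory.
Local Open Scope ring_scope.

Section SBFE.
Variables (R : realFieldType) (n : nat).
Implicit Types (x y : {ffun 'I_n -> bool}) (s : {perm 'I_n}).

Definition determined (f : {ffun 'I_n -> bool} -> bool) (T : {set 'I_n}) x : bool :=
  [forall y : {ffun 'I_n -> bool}, [forall i in T, y i == x i] ==> (f y == f x)].

Definition tested s (k : nat) : {set 'I_n} := [set s i | i : 'I_n & (i < k)%N].

(* number of tests performed: the least k such that the first k tests
   determine f(x) (k = n always works) *)
Definition stop_time f s x : nat :=
  find (fun k => determined f (tested s k) x) (iota 0 n.+1).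

Definition prob (p : 'I_n -> R) x : R :=
  \prod_(i : 'I_n) (if x i then p i else 1 - p i).

Definition run_cost f (c : 'I_n -> R) s x : R :=
  \sum_(i : 'I_n | (i < stop_time f s x)%N) c (s i).

Definition expected_cost f (c p : 'I_n -> R) s : R :=
  \sum_x prob p x * run_cost f c s x.

(* OPT_N(f,c,p): minimum expected cost over all non-adaptive strategies *)
Definition OPT_N f (c p : 'I_n -> R) : R :=
  \big[Num.min/expected_cost f c p 1]_(s : {perm 'I_n}) expected_cost f c p s.
End SBFE.

(* Nodes of the complete binary tree of depth d are numbered in heap order
   1 .. 2^(d+1)-1 (root 1, children of v are 2v and 2v+1); the edge entering
   node v >= 2 is variable number v-2, so edges are 0 .. 2^(d+1)-3. *)
Definition tree_n (d : nat) : nat := (2 ^ d.+1 - 2)%N.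

Definition xat (n : nat) (x : {ffun 'I_n -> bool}) (i : nat) : bool :=
  if insub i is Some j then x j else true.

(* leaf l (node 2^d + l) is alive iff the edges into its ancestors
   (2^d+l) / 2^k, k = 0..d-1, all have value 1 *)
Definition tree_f (d : nat) (x : {ffun 'I_(tree_n d) -> bool}) : bool :=
  [exists l : 'I_(2 ^ d), [forall k : 'I_d, xat x (((2 ^ d + l) %/ 2 ^ k) - 2)%N]].

(* Main.v *)
Require Import Defs.
From HB Require Import structures.
From mathcomp Require Import all_boot all_order fingroup perm all_algebra.
From mathcomp Require Import zify ring lra.
Set Implicit Arguments. Unset Strict Implicit. Unset Printing Implicit Defensive.
Import Order.TTheory GRing.Theory Num.Theory.
Local Close Scope ring_scope.

Definition anc (d l k : nat) : nat := (2 ^ d + l) %/ 2 ^ k.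

Lemma anc_lo d l k : k <= d -> 2 ^ (d - k) <= anc d l k.
Proof.
move=> kd; rewrite /anc.
have -> : 2 ^ (d - k) = 2 ^ d %/ 2 ^ k by rewrite -{2}(subnK kd) expnD mulnK // expn_gt0.
by apply: leq_div2r; rewrite leq_addr.
Qed.

Lemma anc_hi d l k : l < 2 ^ d -> k <= d -> anc d l k < 2 ^ (d - k).+1.
Proof.
move=> ld kd; rewrite /anc ltn_divLR ?expn_gt0 // -expnD addSn subnK //.
by rewrite expnS mul2n -addnn ltn_add2l.
Qed.

Lemma anc_level d l l' k k' : l < 2 ^ d -> l' < 2 ^ d -> k <= d -> k' <= d ->
  anc d l k = anc d l' k' -> k = k'.
Proof.
move=> ld ld' kd kd' E.
have h1 : 2 ^ (d - k) < 2 ^ (d - k').+1.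
  by apply: (leq_ltn_trans (anc_lo l kd)); rewrite E anc_hi.
have h2 : 2 ^ (d - k') < 2 ^ (d - k).+1.
  by apply: (leq_ltn_trans (anc_lo l' kd')); rewrite -E anc_hi.
rewrite ltn_exp2l // in h1; rewrite ltn_exp2l // in h2; lia.
Qed.

Lemma anc_add d l k i : anc d l (k + i) = anc d l k %/ 2 ^ i.
Proof. by rewrite /anc expnD divnMA. Qed.

Lemma anc0 d l : anc d l 0 = 2 ^ d + l.
Proof. by rewrite /anc expn0 divn1. Qed.

Lemma anc_ge2 d l k : k < d -> 2 <= anc d l k.
Proof.
move=> kd; apply: leq_trans (anc_lo l (ltnW kd)).
by rewrite -{1}(expn1 2) leq_exp2l // subn_gt0.
Qed.

Lemma anc_edge_lt d l k : l < 2 ^ d -> k < d -> anc d l k - 2 < tree_n d.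
Proof.
move=> ld kd; have := anc_hi ld (ltnW kd); have := anc_ge2 l kd.
rewrite /tree_n => h1 h2.
have : 2 ^ (d - k).+1 <= 2 ^ d.+1 by rewrite leq_exp2l // ltnS leq_subr.
lia.
Qed.
Local Open Scope ring_scope.

Definition Pr (R : realFieldType) n (p : R) (E : pred {ffun 'I_n -> bool}) : R :=
  \sum_x prob (fun _ => p) x * (E x)%:R.

Lemma ind_forall (R : realFieldType) n (S : {set 'I_n}) (x : {ffun 'I_n -> bool}) :
  ([forall j in S, x j])%:R = \prod_j (if j \in S then (x j)%:R else 1) :> R.
Proof.
have [H|H] := boolP [forall j in S, x j].
  rewrite big1 // => j _; case: ifP => // jS.
  by move/forall_inP: H => /(_ j jS) ->.
move: H; rewrite negb_forall_in => /exists_inP [j jS xj].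
by rewrite (bigD1 j) //= jS (negbTE xj) mul0r.
Qed.

Lemma Pr_allones (R : realFieldType) n (p : R) (S : {set 'I_n}) :
  Pr p (fun x => [forall j in S, x j]) = p ^+ #|S|.
Proof.
rewrite /Pr.
pose F (j : 'I_n) (b : bool) : R := (if b then p else 1 - p) * (if j \in S then b%:R else 1).
transitivity (\sum_(x : {ffun 'I_n -> bool}) \prod_j F j (x j)).
  apply: eq_bigr => x _; rewrite ind_forall /prob -big_split /=.
  by apply: eq_bigr => j _; rewrite /F; case: (x j) => //=.
rewrite -bigA_distr_bigA /=.
transitivity (\prod_(j : 'I_n) (if j \in S then p else 1)).
  apply: eq_bigr => j _; rewrite big_bool /F /=.
  by case: (j \in S); rewrite ?mulr1 ?mulr0 ?addr0 //; rewrite addrC subrK.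
by rewrite -big_mkcond /= prodr_const.
Qed.

Lemma prob_ge0 (R : realFieldType) n (p : R) x : 0 <= p -> p <= 1 -> 0 <= prob (fun _ : 'I_n => p) x.
Proof.
move=> p0 p1; rewrite /prob; apply: prodr_ge0 => i _; case: (x i) => //; by rewrite subr_ge0.
Qed.
Local Close Scope ring_scope.

Definition ed d (i0 : 'I_(tree_n d)) (l k : nat) : 'I_(tree_n d) := insubd i0 (anc d l k - 2).

Lemma val_ed d i0 l k : l < 2 ^ d -> k < d -> val (@ed d i0 l k) = anc d l k - 2.
Proof. by move=> ld kd; rewrite val_insubd anc_edge_lt. Qed.

Lemma ed_inj d i0 l l' k k' : l < 2 ^ d -> l' < 2 ^ d -> k < d -> k' < d ->
  @ed d i0 l k = ed i0 l' k' -> anc d l k = anc d l' k'.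
Proof.
move=> ld ld' kd kd' /(congr1 val); rewrite !val_ed //.
have := anc_ge2 l kd; have := anc_ge2 l' kd'; lia.
Qed.

Definition Sl d (i0 : 'I_(tree_n d)) (l : 'I_(2 ^ d)) : {set 'I_(tree_n d)} :=
  [set ed i0 l k | k : 'I_d].

Definition El d (i0 : 'I_(tree_n d)) (l : 'I_(2 ^ d)) (x : {ffun 'I_(tree_n d) -> bool}) :=
  [forall j in Sl i0 l, x j].

Lemma card_Sl d i0 l : #|@Sl d i0 l| = d.
Proof.
rewrite card_imset ?card_ord // => k k' /ed_inj H.
apply: val_inj; apply: (@anc_level d l l) => //; try exact: ltnW (ltn_ord _).
by apply: H.



Qed.

Lemma xat_ed d i0 (l : 'I_(2 ^ d)) (k : 'I_d) x :
  xat x (anc d l k - 2) = x (@ed d i0 l k).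
Proof.
rewrite /xat; case: insubP => [u _ Hu|Hn]; last by rewrite anc_edge_lt in Hn.
by congr (x _); apply: val_inj; rewrite Hu val_ed.
Qed.

Lemma tree_fE d i0 x : tree_f x = [exists l, @El d i0 l x].
Proof.
apply: eq_existsb => l; rewrite /El.
apply/forallP/forall_inP => [H j /imsetP [k _ ->] | H k].
  by rewrite -xat_ed; apply: H.
rewrite (xat_ed i0); apply: H; exact: imset_f.
Qed.
Local Close Scope ring_scope.

Definition tt d (v w : nat) := find (fun j => anc d v j == anc d w j) (iota 0 d.+1).

Lemma anc_d d l : l < 2 ^ d -> anc d l d = 1.
Proof.
move=> ld; have := anc_lo l (leqnn d); have := anc_hi ld (leqnn d).
rewrite subnn expn0 expn1; lia.
Qed.

Lemma tt_le d v w : v < 2 ^ d -> w < 2 ^ d -> tt d v w <= d.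
Proof.
move=> vd wd.
have H : has (fun j => anc d v j == anc d w j) (iota 0 d.+1).
  apply/hasP; exists d; first by rewrite mem_iota add0n ltnS leqnn.
  by rewrite /= !anc_d.
by move: H; rewrite has_find size_iota ltnS.
Qed.

Lemma tt_before d v w k : v < 2 ^ d -> w < 2 ^ d -> k < tt d v w -> anc d v k != anc d w k.
Proof.
move=> vd wd kt; have := before_find 0 kt; rewrite nth_iota ?add0n ?ltnS => [-> //|].
by apply: leq_trans (ltnW kt) (tt_le vd wd).
Qed.

Lemma tt_after d v w j : v < 2 ^ d -> w < 2 ^ d -> tt d v w <= j -> j <= d ->
  anc d v j = anc d w j.
Proof.
move=> vd wd tj jd.
have H : has (fun j => anc d v j == anc d w j) (iota 0 d.+1).
  by rewrite has_find size_iota ltnS tt_le.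
have := nth_find 0 H; rewrite -/(tt d v w) nth_iota ?add0n ?ltnS ?tt_le // => /eqP E.
by rewrite -(subnKC tj) !anc_add E.
Qed.

Lemma card_union d i0 (v w : 'I_(2 ^ d)) :
  d + tt d v w <= #|@Sl d i0 v :|: Sl i0 w|.
Proof.
have Ht := tt_le (ltn_ord v) (ltn_ord w).
pose D := [set ed i0 w (widen_ord Ht k) | k : 'I_(tt d v w)].
have cD : #|D| = tt d v w.
  rewrite card_imset ?card_ord // => k k' /ed_inj H.
  apply: val_inj; apply: (@anc_level d w w) => //.
  - exact: leq_trans (ltnW (ltn_ord k)) Ht.
  - exact: leq_trans (ltnW (ltn_ord k')) Ht.
  apply: H => //; exact: leq_trans (ltn_ord _) Ht.
have dis : Sl i0 v :&: D = set0.
  apply/setP => j; rewrite inE in_set0; apply/negP => /andP [].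
  move=> /imsetP [k _ ->] /imsetP [k' _ /ed_inj H].
  have kd' : k' < d by exact: leq_trans (ltn_ord k') Ht.
  have E : anc d v k = anc d w k' by apply: H.
  have kk : val k = val k'.
    apply: (@anc_level d v w) => //; [exact: ltnW (ltn_ord k) | exact: ltnW kd'].
  have := tt_before (ltn_ord v) (ltn_ord w) (ltn_ord k'); rewrite -kk E kk eqxx //.
have sub : Sl i0 v :|: D \subset Sl i0 v :|: Sl i0 w.
  apply: setUS; apply/subsetP => j /imsetP [k _ ->]; exact: imset_f.
apply: leq_trans (subset_leq_card sub).
by rewrite cardsU dis cards0 subn0 card_Sl cD.
Qed.
Local Close Scope ring_scope.

Lemma count_tt d (v : 'I_(2 ^ d)) j : j <= d ->
  #|[set w : 'I_(2 ^ d) | tt d v w <= j]| <= 2 ^ j.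
Proof.
move=> jd; have h : 0 < 2 ^ j by rewrite expn_gt0.
pose g (w : 'I_(2 ^ d)) : 'I_(2 ^ j) := Ordinal (ltn_pmod (2 ^ d + w) h).
rewrite -(card_in_imset (f := g)); first by apply: leq_trans (max_card _) _; rewrite card_ord.
move=> w w'; rewrite !inE => tw tw' /(congr1 val) /= E.
have a1 := tt_after (ltn_ord v) (ltn_ord w) tw jd.
have a2 := tt_after (ltn_ord v) (ltn_ord w') tw' jd.
apply: val_inj; apply/eqP; rewrite -(eqn_add2l (2 ^ d)); apply/eqP.
rewrite (divn_eq (2 ^ d + w) (2 ^ j)) (divn_eq (2 ^ d + w') (2 ^ j)) E.
by move: a1 a2; rewrite /anc => <- <-.
Qed.
Local Open Scope ring_scope.

Lemma tele (R : realFieldType) (p : R) (N t : nat) : (t <= N)%N ->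
  \sum_(j < N) ((t <= j)%N)%:R * (p ^+ j * (1 - p)) = p ^+ t - p ^+ N.
Proof.
elim: N => [|N IH] tN; first by rewrite (leqn0 t) in tN; rewrite (eqP tN) big_ord0 subrr.
rewrite big_ord_recr /=.
case: (leqP t N) => [tN'|Nt].
  by rewrite IH // mul1r exprS; ring.
have -> : t = N.+1 by apply/eqP; rewrite eqn_leq tN.
rewrite big1 ?ltnn ?mul0r ?add0r ?subrr // => j _.
by rewrite /= leqNgt ltnS (ltnW (ltn_ord j)) mul0r.
Qed.

Lemma ptE (R : realFieldType) (p : R) (d t : nat) : (t <= d)%N ->
  p ^+ t = \sum_(j < d.+1) ((t <= j)%N)%:R * (p ^+ j * (1 - p)) + p ^+ d.+1.
Proof. by move=> td; rewrite tele ?subrK // ltnW. Qed.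

Lemma sum_bool_card (R : realFieldType) (T : finType) (P : pred T) :
  \sum_(w : T) (P w)%:R = #|P|%:R :> R.
Proof.
rewrite -sum1_card natr_sum [RHS]big_mkcond /=; apply: eq_bigr => w _.
by rewrite unfold_in; case: (P w).
Qed.

Definition GG (R : realFieldType) (p : R) (d : nat) : R :=
  (1 - p) * \sum_(j < d.+1) (2 * p) ^+ j + p * (2 * p) ^+ d.

Lemma sum_pt (R : realFieldType) (p : R) d (v : 'I_(2 ^ d)) : 0 <= p -> p <= 1 ->
  \sum_(w : 'I_(2 ^ d)) p ^+ tt d v w <= GG p d.
Proof.
move=> p0 p1.
rewrite (eq_bigr (fun w : 'I_(2 ^ d) => \sum_(j < d.+1) ((tt d v w <= j)%N)%:R * (p ^+ j * (1 - p)) + p ^+ d.+1)); last first.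
  by move=> w _; apply: ptE; apply: tt_le.
rewrite big_split /= exchange_big /= sumr_const card_ord /GG.
apply: lerD.
  rewrite mulr_sumr; apply: ler_sum => j _.
  rewrite -mulr_suml sum_bool_card.
  have cj := count_tt v (ltn_ord j).
  have -> : (1 - p) * (2 * p) ^+ j = (2 ^ j)%:R * (p ^+ j * (1 - p)) by rewrite exprMn natrX; ring.
  apply: ler_wpM2r.
    by apply: mulr_ge0; [apply: exprn_ge0 | rewrite subr_ge0].
  by rewrite ler_nat; move: cj; rewrite cardsE.
rewrite exprMn -natrX exprS -mulr_natl; rewrite le_eqVlt; apply/orP; left; apply/eqP; ring.
Qed.
Local Open Scope ring_scope.

Lemma El_and d i0 v w x :
  (@El d i0 v x && El i0 w x) = [forall j in Sl i0 v :|: Sl i0 w, x j].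
Proof.
apply/andP/forall_inP => [[/forall_inP H1 /forall_inP H2] j|H].
  by rewrite inE => /orP [/H1|/H2].
by split; apply/forall_inP => j jS; apply: H; rewrite inE jS ?orbT.
Qed.

Lemma GG_bound (R : realFieldType) (eps : R) d : 0 < eps -> eps <= 1 / 2 ->
  eps * GG ((1 + eps) / 2) d <= (1 + eps) ^+ d.
Proof.
move=> e0 e1; rewrite /GG.
have -> : 2 * ((1 + eps) / 2) = 1 + eps by field.
have geo := subrX1 (1 + eps) d.+1.
rewrite (_ : 1 + eps - 1 = eps) in geo; last by ring.
set S := \sum_(i < d.+1) _ in geo *.
set A := (1 + eps) ^+ d in geo *.
have A0 : 0 <= A by rewrite exprn_ge0 // addr_ge0 // ltW.
rewrite exprS -/A in geo.
have -> : eps * ((1 - (1 + eps) / 2) * S + (1 + eps) / 2 * A) =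
   (1 - (1 + eps) / 2) * (eps * S) + eps * (1 + eps) / 2 * A by ring.
rewrite -geo; nra.
Qed.

Lemma Pf_ge (R : realFieldType) (eps : R) d (i0 : 'I_(tree_n d)) :
  0 < eps -> eps <= 1 / 2 -> eps <= Pr ((1 + eps) / 2) (@tree_f d).
Proof.
move=> e0 e1.
set p := (1 + eps) / 2.
have p0 : 0 <= p by rewrite /p; lra.
have p1 : p <= 1 by rewrite /p; lra.
set G := GG p d.
have Gpos : 0 < G.
  rewrite /G /GG; apply: ltr_wpDl.
    apply: mulr_ge0; first by rewrite subr_ge0.
    by apply: sumr_ge0 => j _; apply: exprn_ge0; rewrite mulr_ge0.
  by apply: mulr_gt0; [rewrite /p; lra | apply: exprn_gt0; rewrite /p; lra].
pose Z (x : {ffun 'I_(tree_n d) -> bool}) : R := \sum_l (El i0 l x)%:R.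
pose pr x := prob (fun _ : 'I_(tree_n d) => p) x.
have pr0 x : 0 <= pr x by apply: prob_ge0.
have EZ : \sum_x pr x * Z x = (2 ^ d)%:R * p ^+ d.
  transitivity (\sum_(l : 'I_(2 ^ d)) Pr p (El i0 l)).
    rewrite /Pr exchange_big /=; apply: eq_bigr => x _; by rewrite mulr_sumr.
  rewrite (eq_bigr (fun _ => p ^+ d)); last by move=> l _; rewrite /El Pr_allones card_Sl.
  by rewrite sumr_const card_ord mulr_natl.
have EZ2 : \sum_x pr x * Z x ^+ 2 <= (2 ^ d)%:R * p ^+ d * G.
  rewrite (_ : \sum_x pr x * Z x ^+ 2 = \sum_(v : 'I_(2 ^ d)) \sum_(w : 'I_(2 ^ d)) p ^+ #|Sl i0 v :|: Sl i0 w|); last first.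
    have Z2 x : Z x ^+ 2 = \sum_(v : 'I_(2 ^ d)) \sum_(w : 'I_(2 ^ d)) ((El i0 v x && El i0 w x) : nat)%:R.
      rewrite expr2 /Z mulr_suml; apply: eq_bigr => v _; rewrite mulr_sumr; apply: eq_bigr => w _.
      by rewrite -natrM mulnb.
    under eq_bigr do rewrite Z2 mulr_sumr.
    rewrite exchange_big /=; apply: eq_bigr => v _.
    under eq_bigr do rewrite mulr_sumr.
    rewrite exchange_big /=; apply: eq_bigr => w _.
    rewrite -Pr_allones /Pr; apply: eq_bigr => x _; by rewrite El_and.
  apply: (@le_trans _ _ (\sum_(v : 'I_(2 ^ d)) p ^+ d * G)); last first.
    by rewrite sumr_const card_ord -mulrA mulr_natl.
  apply: ler_sum => v _.
  apply: (@le_trans _ _ (\sum_(w : 'I_(2 ^ d)) p ^+ d * p ^+ tt d v w)).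
    apply: ler_sum => w _; rewrite -exprD; apply: ler_wiXn2l => //; exact: card_union.
  rewrite -mulr_sumr; apply: ler_wpM2l; first exact: exprn_ge0.
  exact: sum_pt.
have pt x : 2 * G * Z x <= Z x ^+ 2 + G ^+ 2 * (tree_f x)%:R.
  rewrite (tree_fE i0); case: existsP => [_|H].
    rewrite mulr1 -subr_ge0 (_ : _ - _ = (Z x - G) ^+ 2); [exact: sqr_ge0 | ring].
  have -> : Z x = 0 by rewrite /Z big1 // => l _; case E: (El i0 l x) => //; case: H; exists l.
  by rewrite mulr0 expr0n /= add0r mulr0 lexx.
have main : 2 * G * \sum_x pr x * Z x <=
    \sum_x pr x * Z x ^+ 2 + G ^+ 2 * Pr p (@tree_f d).
  rewrite /Pr mulr_sumr mulr_sumr -big_split /=; apply: ler_sum => x _.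
  rewrite -/(pr x); have := pt x; have := pr0 x; nra.
rewrite EZ in main.
have := GG_bound d e0 e1; rewrite -/p -/G.
have -> : (1 + eps) ^+ d = (2 ^ d)%:R * p ^+ d by rewrite natrX -exprMn /p; congr (_ ^+ _); field.
move: main EZ2; set A := (2 ^ d)%:R * p ^+ d; set P := Pr p _.
have A0 : 0 <= A by rewrite mulr_ge0 ?exprn_ge0.
set Q2 := \sum_x _ => main hQ eG.
have h1 : G * A <= G * (G * P).
  have e : G * (G * P) - G * A = (Q2 + G ^+ 2 * P - 2 * G * A) + (A * G - Q2) by ring.
  rewrite -subr_ge0 e; apply: addr_ge0; rewrite subr_ge0; [exact: main | exact: hQ].
rewrite ler_pM2l // in h1.
have h2 : eps * G <= P * G by apply: le_trans eG _; rewrite mulrC.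
by rewrite ler_pM2r // in h2.
Qed.
Local Close Scope ring_scope.

Lemma card_lt n k : #|[set i : 'I_n | i < k]| <= k.
Proof.
rewrite cardE -(size_map val) -[k in _ <= k](size_iota 0).
apply: uniq_leq_size; first by rewrite map_inj_uniq ?enum_uniq //; exact: val_inj.
move=> m /mapP [i]; rewrite mem_enum inE => ik ->.
by rewrite mem_iota add0n ik.
Qed.

Lemma card_tested n (s : {perm 'I_n}) k : #|tested s k| <= k.
Proof.
rewrite /tested; apply: leq_trans (leq_imset_card _ _) _.
exact: card_lt.
Qed.

Lemma tested_mono n (s : {perm 'I_n}) k k' : k <= k' -> tested s k \subset tested s k'.
Proof.
move=> kk; apply/subsetP => j /imsetP [i]; rewrite inE => ik ->.
by apply: imset_f; rewrite inE (leq_trans ik kk).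
Qed.

Lemma determined_mono n f (T T' : {set 'I_n}) x : T \subset T' ->
  determined f T x -> determined f T' x.
Proof.
move=> /subsetP sub /forallP H; apply/forallP => y; apply/implyP => /forall_inP Hy.
apply: (implyP (H y)); apply/forall_inP => i iT; apply: Hy; exact: sub.
Qed.

Lemma determined_full n f (s : {perm 'I_n}) x : determined f (tested s n) x.
Proof.
apply/forallP => y; apply/implyP => /forall_inP H.
have -> : y = x.
  apply/ffunP => i; apply/eqP; apply: H.
  by rewrite -(permKV s i); apply: imset_f; rewrite inE ltn_ord.
exact: eqxx.
Qed.

Lemma stop_spec n f (s : {perm 'I_n}) x :
  determined f (tested s (stop_time f s x)) x /\ stop_time f s x <= n.
Proof.
have H : has (fun k => determined f (tested s k) x) (iota 0 n.+1).
  apply/hasP; exists n; first by rewrite mem_iota add0n ltnS leqnn.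
  exact: determined_full.
have lt : stop_time f s x < n.+1 by move: H; rewrite has_find size_iota.
split => //.
by have := nth_find 0 H; rewrite -/(stop_time f s x) nth_iota ?add0n.
Qed.

Lemma cert d (i0 : 'I_(tree_n d)) (T : {set 'I_(tree_n d)}) x :
  determined (@tree_f d) T x -> tree_f x ->
  exists l, (Sl i0 l \subset T) && El i0 l x.
Proof.
move=> /forallP H fx.
pose y := [ffun j => (j \in T) && x j].
have := H y; rewrite fx => /implyP Hy.
have hc : [forall i in T, y i == x i] by apply/forall_inP => i iT; rewrite ffunE iT.
have : tree_f y by have := Hy hc => /eqP.
rewrite (tree_fE i0) => /existsP [l /forall_inP Hl].
exists l; apply/andP; split.
  by apply/subsetP => j /Hl; rewrite ffunE => /andP [].
by apply/forall_inP => j /Hl; rewrite ffunE => /andP [].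
Qed.
Local Open Scope ring_scope.

Lemma final_ineq (R : realFieldType) (eps q K : R) :
  0 < q -> 1 <= K -> K * q <= eps -> eps < K * q + q ->
  eps ^+ 2 / (8 * q) <= K * eps - K * (K - 1) / 2 * q.
Proof.
move=> q0 K1 h1 h2.
rewrite ler_pdivrMr ?mulr_gt0 //.
nra.
Qed.

Lemma sumlin (R : realFieldType) (a b : R) K :
  \sum_(k < K) (a - k%:R * b) = K%:R * a - K%:R * (K%:R - 1) / 2 * b.
Proof.
elim: K => [|K IH]; first by rewrite big_ord0; ring.
rewrite big_ord_recr /= IH -addn1 natrD; by field.
Qed.

Lemma step_k (R : realFieldType) (eps : R) d (i0 : 'I_(tree_n d)) (s : {perm 'I_(tree_n d)}) k :
  0 < eps -> eps <= 1 / 2 -> (0 < d)%N ->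
  eps - k%:R * ((1 + eps) / 2) ^+ d <=
  \sum_x prob (fun _ => (1 + eps) / 2) x * ((k < stop_time (@tree_f d) s x)%N)%:R.
Proof.
move=> e0 e1 d0.
set p := (1 + eps) / 2.
have p0 : 0 <= p by rewrite /p; lra.
have p1 : p <= 1 by rewrite /p; lra.
pose L := [set l | Sl i0 l \subset tested s k].
have cL : (#|L| <= k)%N.
  pose z : 'I_d := Ordinal d0.
  pose g (l : 'I_(2 ^ d)) := ed i0 l z.
  rewrite -(card_in_imset (f := g)).
    apply: leq_trans (card_tested s k); apply: subset_leq_card.
    apply/subsetP => j /imsetP [l]; rewrite inE => /subsetP Hl ->.
    by apply: Hl; apply: imset_f.
  move=> l l' _ _ /ed_inj H; apply: val_inj.
  have := H (ltn_ord l) (ltn_ord l') d0 d0; rewrite /= !anc0.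
  by move/eqP; rewrite eqn_add2l => /eqP.
have pt x : (tree_f x)%:R <= ((k < stop_time (@tree_f d) s x)%N)%:R + \sum_(l in L) (El i0 l x)%:R :> R.
  case: (ltnP k (stop_time (@tree_f d) s x)) => [_|sk].
    rewrite /= ler_wpDr ?sumr_ge0 //; last by case: (tree_f x).
  case fx: (tree_f x); last by rewrite add0r sumr_ge0.
  have [det _] := stop_spec (@tree_f d) s x.
  have := cert i0 (determined_mono (tested_mono s sk) det) fx.
  move=> [l /andP [lL Ex]].
  rewrite /= add0r (bigD1 l) ?inE //= Ex ler_wpDr // sumr_ge0 //.
have := Pf_ge i0 e0 e1; rewrite -/p => Pf.
apply: le_trans (lerB Pf (lexx (k%:R * p ^+ d))) _.
rewrite lerBlDr.
apply: le_trans (_ : _ <= \sum_x prob (fun _ => p) x * (((k < stop_time (@tree_f d) s x)%N)%:R + \sum_(l in L) (El i0 l x)%:R)) _.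
  rewrite /Pr; apply: ler_sum => x _; apply: ler_wpM2l; [exact: prob_ge0 | exact: pt].
under eq_bigr do rewrite mulrDr.
rewrite big_split /= lerD2l.
under eq_bigr do rewrite mulr_sumr.
rewrite exchange_big /=.
rewrite (eq_bigr (fun _ => p ^+ d)); last first.
  by move=> l _; rewrite -/(Pr p (El i0 l)) /El Pr_allones card_Sl.
rewrite sumr_const mulr_natl; apply: ler_wpMn2l; [exact: exprn_ge0 | exact: cL].
Qed.

Lemma cost_lb (R : realFieldType) (eps : R) d (i0 : 'I_(tree_n d)) (s : {perm 'I_(tree_n d)}) K :
  0 < eps -> eps <= 1 / 2 -> (0 < d)%N -> (K <= tree_n d)%N ->
  \sum_(k < K) (eps - k%:R * ((1 + eps) / 2) ^+ d) <=
  expected_cost (@tree_f d) (fun _ => 1) (fun _ => (1 + eps) / 2) s.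
Proof.
move=> e0 e1 d0 Kn.
set p := (1 + eps) / 2.
have p0 : 0 <= p by rewrite /p; lra.
have p1 : p <= 1 by rewrite /p; lra.
apply: le_trans (_ : _ <= \sum_(k < K) \sum_x prob (fun _ => p) x * ((k < stop_time (@tree_f d) s x)%N)%:R) _.
  by apply: ler_sum => k _; apply: step_k.
rewrite exchange_big /expected_cost; apply: ler_sum => x _.
rewrite -mulr_sumr; apply: ler_wpM2l; first exact: prob_ge0.
rewrite /run_cost.
set st := stop_time _ _ _.
rewrite -(@big_ord_narrow _ _ _ K (tree_n d) (fun i : 'I_(tree_n d) => ((i < st)%N)%:R : R) Kn) /=.
rewrite big_mkcond [X in _ <= X]big_mkcond /=; apply: ler_sum => i _.
case: (ltnP i K) => iK; case: (ltnP i st) => ist //=.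
Qed.

Theorem mainTheorem13 (R : realFieldType) (eps : R) (d : nat) :
  0 < eps -> eps <= 1 / 2 -> (1 <= d)%N ->
  ((1 + eps) / 2) ^+ d <= eps ->
  eps ^+ 2 / (8 * ((1 + eps) / 2) ^+ d)
    <= OPT_N (@tree_f d) (fun _ => 1) (fun _ => (1 + eps) / 2).
Proof.
move=> e0 e1 d1 qe.
set q := ((1 + eps) / 2) ^+ d.
have q0 : 0 < q by rewrite /q exprn_gt0 //; lra.
have n2 : (2 ^ d <= tree_n d)%N.
  rewrite /tree_n expnS; have : (2 <= 2 ^ d)%N by rewrite -{1}(expn1 2) leq_exp2l.
  lia.
have n0 : (0 < tree_n d)%N by apply: leq_trans n2; rewrite expn_gt0.
pose i0 : 'I_(tree_n d) := Ordinal n0.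
have exP : exists k, (k <= tree_n d)%N && (k%:R * q <= eps).
  by exists 1%N; rewrite n0 mul1r.
have bnd : forall k, (k <= tree_n d)%N && (k%:R * q <= eps) -> (k <= tree_n d)%N.
  by move=> k /andP [].
case: (ex_maxnP exP bnd) => K /andP [Kn Kq] Kmax.
have K1 : (1 <= K)%N by apply: Kmax; rewrite n0 mul1r.
have Klt : eps < K%:R * q + q.
  case: (ltnP K (tree_n d)) => [Kn'|nK].
    have : ~~ ((K.+1)%:R * q <= eps).
      apply/negP => H; have := Kmax K.+1; rewrite Kn' H => /(_ isT); by rewrite ltnn.
    by rewrite -ltNge -addn1 natrD mulrDl mul1r.
  have KE : K = tree_n d by apply/eqP; rewrite eqn_leq Kn nK.
  have h1 : 1 <= (2 ^ d)%:R * q.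
    rewrite /q natrX -exprMn exprn_ege1 //; lra.
  have h2 : (2 ^ d)%:R * q <= K%:R * q by rewrite ler_pM2r // ler_nat KE.
  lra.
have key s : eps ^+ 2 / (8 * q) <= expected_cost (@tree_f d) (fun _ => 1) (fun _ => (1 + eps) / 2) s.
  apply: le_trans (cost_lb i0 s e0 e1 d1 Kn).
  rewrite sumlin; apply: final_ineq => //; by rewrite ler1n.
rewrite /OPT_N; apply: (big_ind (fun v => eps ^+ 2 / (8 * q) <= v)) => //.
  by move=> a b ha hb; rewrite le_min ha hb.
Qed.
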